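(* Let $G$ be a graph and $(v_1,\dots,v_k)$ a list of (not necessarily distinct) vertices of $G$. Let $G_{m_1,\dots,m_k}$ be the graph obtained by attaching, for each $i$, one endvertex of a new $m_i$-vertex path to $v_i$ by an edge (so $G_{m_1,\dots,m_k}$ has $m_1+\dots+m_k$ more vertices than $G$), and let $R_{m_1,\dots,m_k}(z)$ be its reciprocal polynomial. Then there are integer polynomials $P_{(\epsilon_1,\dots,\epsilon_k)}(z)$, $\epsilon_i\in\{0,1\}$, depending on $G$ and $(v_1,\dots,v_k)$ but not on $m_1,\dots,m_k$, such that whenever all $m_i\ge2$, $$(y^2-1)^kR_{m_1,\dots,m_k}(z)=\sum_{\epsilon_1,\dots,\epsilon_k\in\{0,1\}}y^{2\sum_i\epsilon_im_i}P_{(\epsilon_1,\dots,\epsilon_k)}(z).$$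
   Context: Graphs are finite simple graphs; $\chi_G$ is the characteristic polynomial of the adjacency matrix of an $n$-vertex graph $G$. The reciprocal polynomial is $R_G(z)=z^n\chi_G(z+1/z)$ if $G$ is nonbipartite and $R_G(z)=z^{n/2}\chi_G(\sqrt z+1/\sqrt z)$ if $G$ is bipartite. Here $y=\sqrt z$ if the graphs are bipartite, and $y=z$ otherwise. *)

(* Defs.v *)
From HB Require Import structures.
From mathcomp Require Import all_boot all_order all_algebra.
Set Implicit Arguments. Unset Strict Implicit. Unset Printing Implicit Defensive.
Import Order.TTheory GRing.Theory Num.Theory.
Local Open Scope ring_scope.

(* A finite simple graph is a symmetric irreflexive relation on a finType. *)

Definition adjmx (V : finType) (r : rel V) : 'M[int]_#|V| :=
  \matrix_(a, b) (r (enum_val a) (enum_val b))%:R.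

Definition charpoly_graph (V : finType) (r : rel V) : {poly int} :=
  char_poly (adjmx r).

Definition bipartite (V : finType) (r : rel V) : bool :=
  [exists f : {ffun V -> bool}, [forall x, [forall y, r x y ==> (f x != f y)]]].

(* Q(y) = y^n chi(y + 1/y) written out as a polynomial:
   sum_j c_j y^(n-j) (y^2+1)^j, where chi = sum_j c_j x^j, n = #|V|. *)
Definition recip_aux (V : finType) (r : rel V) : {poly int} :=
  let chi := charpoly_graph r in
  \sum_(j < size chi) chi`_j *: ('X^(#|V| - j) * ('X^2 + 1) ^+ j).

(* Reciprocal polynomial R_G(z):
   nonbipartite: R_G(z) = z^n chi(z + 1/z) = Q(z);
   bipartite:    R_G(z) = z^(n/2) chi(sqrt z + 1/sqrt z), i.e. R_G(y^2) = Q(y)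
                 (Q is even in that case); R_G is the even part of Q in y^2. *)
Definition recip (V : finType) (r : rel V) : {poly int} :=
  let Q := recip_aux r in
  if bipartite r then \poly_(i < size Q) Q`_(2 * i) else Q.

(* Graph G_{m_1..m_k}: vertices of G plus, for each i, a path
   (i,0) - (i,1) - ... - (i, m_i - 1), with (i,0) joined to v_i. *)
Definition ext_vert (T : finType) (k : nat) (m : 'I_k -> nat) : finType :=
  (T + {i : 'I_k & 'I_(m i)})%type.

Definition ext_rel (T : finType) (e : rel T) (k : nat) (v : 'I_k -> T)
    (m : 'I_k -> nat) : rel (@ext_vert T k m) :=
  fun a b =>
    match a, b with
    | inl x, inl y => e x y
    | inl x, inr p => (x == v (tag p)) && (val (tagged p) == 0%N)
    | inr p, inl x => (x == v (tag p)) && (val (tagged p) == 0%N)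
    | inr p, inr q => (tag p == tag q) &&
        (((val (tagged p)).+1 == val (tagged q)) ||
         ((val (tagged q)).+1 == val (tagged p)))
    end.

(* Main.v *)
Require Import Defs.
From HB Require Import structures.
From mathcomp Require Import all_boot all_order all_algebra fingroup perm.
Import Order.TTheory GRing.Theory Num.Theory.
Local Open Scope ring_scope.
From mathcomp Require Import zify ring.
From Stdlib Require Import FunctionalExtensionality.
Set Implicit Arguments. Unset Strict Implicit. Unset Printing Implicit Defensive.
Definition fdet (R : comRingType) (V : finType) (M : V -> V -> R) : R :=
  \sum_(s : {perm V}) (-1) ^+ s * \prod_x M x (s x).

Section Ext.
Variables (W V : finType) (h : W -> V) (hinj : injective h).

Definition extf (s : {perm W}) (x : V) : V :=
  if [pick a | h a == x] is Some a then h (s a) else x.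

Lemma extf_h s a : extf s (h a) = h (s a).
Proof.
rewrite /extf; case: pickP => [b /eqP/hinj -> //|/(_ a)]; by rewrite eqxx.
Qed.

Lemma extf_n s x : (forall a, h a != x) -> extf s x = x.
Proof.
move=> H; rewrite /extf; case: pickP => [b hb|//].
by move: (H b); rewrite hb.
Qed.

Lemma im_dec x : {a | h a = x} + {forall a, h a != x}.
Proof.
case: (pickP (fun a => h a == x)) => [a /eqP ha|none]; first by left; exists a.
by right=> a; rewrite none.
Qed.

Lemma extf_inj s : injective (extf s).
Proof.
move=> x y.
case: (im_dec x) => [[a <-]|nx]; case: (im_dec y) => [[b <-]|ny].
- by rewrite !extf_h => /hinj/perm_inj ->.
- by rewrite extf_h (extf_n _ ny) => E; move: (ny (s a)); rewrite E eqxx.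
- by rewrite extf_h (extf_n _ nx) => E; move: (nx (s b)); rewrite E eqxx.
- by rewrite (extf_n _ nx) (extf_n _ ny).
Qed.

Definition extp s : {perm V} := perm (@extf_inj s).

Lemma extpE s a : extp s (h a) = h (s a).
Proof. by rewrite permE extf_h. Qed.

Lemma extpN s x : (forall a, h a != x) -> extp s x = x.
Proof. by move=> H; rewrite permE extf_n. Qed.

Lemma extp1 : extp 1%g = 1%g.
Proof.
apply/permP=> x; rewrite perm1; case: (im_dec x) => [[a <-]|nx].
  by rewrite extpE perm1.
by rewrite extpN.
Qed.

Lemma extpM s1 s2 : extp (s1 * s2)%g = (extp s1 * extp s2)%g.
Proof.
apply/permP=> x; rewrite permM; case: (im_dec x) => [[a <-]|nx].
  by rewrite !extpE permM.
by rewrite !extpN.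
Qed.

Lemma extpT a b : extp (tperm a b) = tperm (h a) (h b).
Proof.
apply/permP=> x; case: (im_dec x) => [[c <-]|nx].
  rewrite extpE; case: (tpermP a b c) => [->|->|ca cb].
  - by rewrite tpermL.
  - by rewrite tpermR.
  rewrite tpermD // inj_eq //; apply/eqP=> E; [exact: ca|exact: cb].
rewrite extpN // tpermD //; apply/eqP=> E; by move: (nx a); rewrite E eqxx.
Qed.

Lemma odd_extp s : odd_perm (extp s) = odd_perm s.
Proof.
have [ts -> _] := prod_tpermP s.
elim: ts => [|t ts IH]; first by rewrite !big_nil extp1 !odd_perm1.
by rewrite !big_cons extpM extpT !odd_mul_tperm IH inj_eq.
Qed.

Lemma extp_inj : injective extp.
Proof.
move=> s1 s2 E; apply/permP=> a; apply: hinj.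
by rewrite -!extpE E.
Qed.

Definition fixes (s : {perm V}) := [forall x, [exists a, h a == x] || (s x == x)].

Lemma fixesP s : fixes s -> s \in [set extp t | t in [set: {perm W}]].
Proof.
move=> /forallP F.
pose g a := odflt a [pick b | h b == s (h a)].
have gE a : h (g a) = s (h a).
  rewrite /g; case: pickP => [b /eqP //|nb].
  move: (F (s (h a))) => /orP [/existsP [b hb]|/eqP E].
    by move: (nb b); rewrite hb.
  by move/perm_inj: E => E; move: (nb a); rewrite E eqxx.
have ginj : injective g.
  by move=> a b E; apply: hinj; apply: (@perm_inj _ s); rewrite -!gE E.
apply/imsetP; exists (perm ginj); first by rewrite inE.
apply/permP=> x; case: (im_dec x) => [[a <-]|nx].
  by rewrite extpE permE gE.
rewrite extpN //; move: (F x) => /orP [/existsP [b /eqP hb]|/eqP //].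
by move: (nx b); rewrite hb eqxx.
Qed.

Lemma fdet_inj (R : comRingType) (M : V -> V -> R) :
  (forall x, (forall a, h a != x) -> forall y, M x y = (x == y)%:R) ->
  fdet M = fdet (fun a b => M (h a) (h b)).
Proof.
move=> HM; rewrite /fdet.
have prodE (s : {perm V}) : fixes s ->
    \prod_x M x (s x) = \prod_(x | [exists a, h a == x]) M x (s x).
  move=> /forallP F; rewrite (bigID (fun x => [exists a, h a == x])) /=.
  rewrite [X in _ * X]big1 ?mulr1 // => x nx.
  have nx' : forall a, h a != x by move=> a; apply/negP=> E; case/existsP: nx; exists a.
  by move: (F x); rewrite (negbTE nx) /= => /eqP ->; rewrite HM // eqxx.
rewrite (bigID fixes) /= [X in _ + X]big1 ?addr0; last first.
  move=> s; rewrite /fixes negb_forall => /existsP [x].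
  rewrite negb_or => /andP [nx sx].
  have nx' : forall a, h a != x by move=> a; apply/negP=> E; case/existsP: nx; exists a.
  rewrite (bigD1 x) //= HM // eq_sym (negbTE sx) mul0r mulr0 //.
rewrite (eq_bigl (fun s => s \in [set extp t | t in [set: {perm W}]])); last first.
  move=> s; apply/idP/idP; first exact: fixesP.
  case/imsetP=> t _ ->; apply/forallP=> x.
  case: (im_dec x) => [[a <-]|nx]; first by apply/orP; left; apply/existsP; exists a.
  by rewrite extpN // eqxx orbT.
rewrite big_imset /=; last by move=> s t _ _; apply: extp_inj.
apply: eq_big => [t|t _]; first by rewrite inE.
rewrite odd_extp prodE; last first.
  apply/forallP=> x; case: (im_dec x) => [[a <-]|nx].
    by apply/orP; left; apply/existsP; exists a.
  by rewrite extpN // eqxx orbT.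
congr (_ * _).
rewrite (eq_bigl (fun x => x \in [set h a | a in [set: W]])); last first.
  move=> x; apply/existsP/imsetP => [[a /eqP <-]|[a _ ->]]; first by exists a.
  by exists a.
rewrite big_imset /=; last by move=> a b _ _; apply: hinj.
by apply: eq_big => [a|a _]; rewrite ?inE ?extpE.
Qed.
End Ext.
Lemma prod_eq0 (R : comRingType) (V : finType) (F : V -> R) x :
  F x = 0 -> \prod_y F y = 0.
Proof. by move=> Fx; rewrite (bigD1 x) //= Fx mul0r. Qed.

Lemma fdet_pendant (R : comRingType) (V : finType) (M : V -> V -> R) (a : R) u w :
  u != w -> M u u = a -> M u w = -1 -> M w u = -1 ->
  (forall x, x != u -> x != w -> M u x = 0) ->
  (forall x, x != u -> x != w -> M x u = 0) ->
  fdet M = a * fdet (fun x y => if (x == u) || (y == u) then (x == y)%:R else M x y)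
   - fdet (fun x y => if [|| x == u, x == w, y == u | y == w]
                      then (x == y)%:R else M x y).
Proof.
move=> uw Muu Muw Mwu Mu Mu'.
set M1 := fun x y => _; set M2 := fun x y => _.
pose t := tperm u w.
rewrite /fdet [X in _ - X](reindex_inj (mulgI t)) mulr_sumr -sumrB.
apply: eq_bigr => s _.
rewrite odd_mul_tperm uw /=.
have sinj := @perm_inj _ s.
have tsE x : (t * s)%g x = s (t x) by rewrite permM.
have wu : w != u by rewrite eq_sym.
case: (eqVneq (s u) u) => [su|su].
- rewrite (@prod_eq0 _ _ (fun x => M2 x ((t * s)%g x)) w); last first.
    by rewrite /M2 tsE tpermR su eqxx orbT /= eq_sym (negbTE uw).
  rewrite mulr0 subr0 mulrCA; congr (_ * _).
  rewrite (bigD1 u) //= [in RHS](bigD1 u) //= su Muu /M1 !eqxx /= mul1r.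
  congr (_ * _); apply: eq_bigr => x xu.
  have sxu : s x != u by rewrite -su inj_eq.
  by rewrite (negbTE xu) (negbTE sxu).
case: (eqVneq (s u) w) => [sw|sw].
- rewrite (@prod_eq0 _ _ (fun x => M1 x (s x)) u); last first.
    by rewrite /M1 eqxx /= sw (negbTE uw).
  rewrite !mulr0 sub0r.
  case: (eqVneq (s w) u) => [swu|swu].
  + rewrite (bigD1 u) //= (bigD1 w) //= sw swu Muw Mwu mulN1r mulNr opprK mul1r.
    rewrite [in RHS](bigD1 u) //= [in RHS](bigD1 w) //= !tsE tpermL tpermR sw swu.
    rewrite /M2 !eqxx !orbT /= !mul1r signrN mulNr opprK.
    congr (_ * _); apply: eq_bigr => x /andP [xu xw].
    rewrite tsE tpermD 1?eq_sym //.
    have sxu : s x != u by rewrite -swu inj_eq.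
    have sxw : s x != w by rewrite -sw inj_eq.
    by rewrite eq_sym (negbTE xu) (negbTE xw) (negbTE sxu) (negbTE sxw).
  + pose p := (s^-1)%g u.
    have sp : s p = u by rewrite /p permKV.
    have pu : p != u by apply/eqP=> E; move: su; rewrite -{1}E sp eqxx.
    have pw : p != w by apply/eqP=> E; move: swu; rewrite -E sp eqxx.
    rewrite (@prod_eq0 _ _ (fun x => M x (s x)) p); last by rewrite sp Mu'.
    rewrite (@prod_eq0 _ _ (fun x => M2 x ((t * s)%g x)) u); last first.
      by rewrite /M2 eqxx /= tsE tpermL eq_sym (negbTE swu).
    by rewrite !mulr0 oppr0.
- rewrite (@prod_eq0 _ _ (fun x => M x (s x)) u); last by rewrite Mu // eq_sym.
  rewrite (@prod_eq0 _ _ (fun x => M1 x (s x)) u); last first.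
    by rewrite /M1 eqxx /= eq_sym (negbTE su).
  rewrite (@prod_eq0 _ _ (fun x => M2 x ((t * s)%g x)) w); last first.
    by rewrite /M2 eqxx orbT /= tsE tpermR eq_sym (negbTE sw).
  by rewrite !mulr0 subr0.
Qed.
Definition Qb (p : {poly int}) (N : nat) : {poly int} :=
  \sum_(j < N.+1) p`_j *: ('X^(N - j) * ('X^2 + 1) ^+ j).

Lemma QbB p q N : Qb (p - q) N = Qb p N - Qb q N.
Proof. by rewrite /Qb -sumrB; apply: eq_bigr => j _; rewrite coefB scalerBl. Qed.

Lemma QbX p N : Qb ('X * p) N.+1 = ('X^2 + 1) * Qb p N.
Proof.
rewrite /Qb big_ord_recl coefXM eqxx scale0r add0r mulr_sumr.
apply: eq_bigr => j _; rewrite coefXM /= /bump leq0n add0n add1n subSS exprS mulrCA scalerAr //.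
Qed.

Lemma QbS2 (p : {poly int}) N : (size p <= N.+1)%N -> Qb p N.+2 = 'X^2 * Qb p N.
Proof.
move=> sp; rewrite /Qb [in LHS]big_ord_recr [in LHS]big_ord_recr /=.
have z1 : p`_N.+1 = 0 by rewrite nth_default.
have z2 : p`_N.+2 = 0 by rewrite nth_default // (leq_trans sp).
have z3 : p`_N.+1 = 0 by rewrite nth_default.
rewrite z1 z2 !scale0r !addr0 mulr_sumr; apply: eq_bigr => j _.
have -> : (N.+2 - j = 2 + (N - j))%N by have := ltn_ord j; lia.
by rewrite exprD -mulrA scalerAr.
Qed.

Definition evenp (p : {poly int}) : {poly int} := \poly_(i < size p) p`_(2 * i)%N.

Lemma coef_even p i : (evenp p)`_i = p`_(2 * i)%N.
Proof.
rewrite coef_poly; case: ltnP => // H; rewrite nth_default //; apply: (leq_trans H); by rewrite mul2n -addnn leq_addr.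
Qed.

Lemma evenD p q : evenp (p + q) = evenp p + evenp q.
Proof. by apply/polyP=> i; rewrite coefD !coef_even coefD. Qed.

Lemma evenB p q : evenp (p - q) = evenp p - evenp q.
Proof. by apply/polyP=> i; rewrite coefB !coef_even coefB. Qed.

Lemma even0 : evenp 0 = 0.
Proof. by apply/polyP=> i; rewrite coef_even !coef0. Qed.

Lemma evenX2 p : evenp ('X^2 * p) = 'X * evenp p.
Proof.
apply/polyP=> i; rewrite coef_even coefXnM coefXM coef_even.
case: i => [|i] //=; rewrite ifF; last by lia.
by congr (p`_ _); lia.
Qed.

Lemma evenXn p a : evenp (('X^2) ^+ a * p) = 'X^a * evenp p.
Proof.
elim: a p => [|a IH] p; first by rewrite !expr0 !mul1r.
by rewrite exprS -mulrA evenX2 IH exprS mulrA.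
Qed.

Lemma evenM1k p k : evenp (('X^2 - 1) ^+ k * p) = ('X - 1) ^+ k * evenp p.
Proof.
elim: k p => [|k IH] p; first by rewrite !expr0 !mul1r.
rewrite exprSr -mulrA IH mulrBl mul1r evenB evenX2.
by rewrite exprSr -mulrA mulrBl mul1r.
Qed.

Lemma even_sum (I : finType) (F : I -> {poly int}) :
  evenp (\sum_i F i) = \sum_i evenp (F i).
Proof. exact: (big_morph evenp evenD even0). Qed.

Definition upd k (m : 'I_k -> nat) (i : 'I_k) (n : nat) : 'I_k -> nat :=
  fun j => if j == i then n else m j.

Definition wt (R : comRingType) (t : R) (n : nat) (b : bool) : R :=
  if b then t ^+ n - 1 else t - t ^+ n.

Definition isrec (R : comRingType) (t : R) k (g : ('I_k -> nat) -> R) :=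
  forall m i n, g (upd m i n.+2) = (1 + t) * g (upd m i n.+1) - t * g (upd m i n).

Lemma sum_upd k (m : 'I_k -> nat) i a :
  (\sum_j upd m i a j = a + \sum_(j | j != i) m j)%N.
Proof.
rewrite (bigD1 i) //= /upd eqxx; congr (_ + _)%N.
by apply: eq_bigr => j /negbTE ->.
Qed.

Lemma sum_split k (m : 'I_k -> nat) i :
  (\sum_j m j = m i + \sum_(j | j != i) m j)%N.
Proof. by rewrite (bigD1 i). Qed.

Lemma uniq0 (R : comRingType) (t : R) k (g : ('I_k -> nat) -> R) :
  isrec t g -> (forall d : {ffun 'I_k -> bool}, g (fun i => nat_of_bool (d i)) = 0) ->
  forall m, g m = 0.
Proof.
move=> Hr H0 m.
have cube m' : (forall i, m' i <= 1)%N -> g m' = 0.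
  move=> Hm; rewrite -(H0 [ffun i => m' i == 1%N]).
  congr g; apply: functional_extensionality => i; rewrite ffunE.
  by have := Hm i; case: (m' i) => [|[|]].
move: {2}(\sum_i m i)%N (leqnn (\sum_i m i)%N) => s.
elim: s m => [|s IH] m Hs.
  apply: cube => i; move: Hs; rewrite (bigD1 i) //=; lia.
case: (boolP [forall i, m i <= 1]%N) => [/forallP|]; first exact: cube.
rewrite negb_forall => /existsP [i]; rewrite -ltnNge.
case E: (m i) => [|[|n]] // _.
have -> : m = upd m i n.+2.
  by apply: functional_extensionality => j; rewrite /upd; case: eqP => [->|].
rewrite Hr !IH ?mulr0 ?subr0 //.
- move: Hs; rewrite (sum_split _ i) sum_upd E; lia.
- move: Hs; rewrite (sum_split _ i) sum_upd E; lia.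
Qed.

Lemma wt_rec (R : comRingType) (t : R) n b :
  wt t n.+2 b = (1 + t) * wt t n.+1 b - t * wt t n b.
Proof. by case: b; rewrite /wt !exprS; ring. Qed.

Lemma interp (R : comRingType) (t : R) k (f : ('I_k -> nat) -> R) :
  isrec t f -> forall m,
  (t - 1) ^+ k * f m = \sum_(d : {ffun 'I_k -> bool})
     (\prod_i wt t (m i) (d i)) * f (fun i => nat_of_bool (d i)).
Proof.
move=> Hf m; apply/eqP; rewrite -subr_eq0; apply/eqP; move: m.
apply: (uniq0 (t := t)).
- move=> m i n.
  pose C (d : {ffun 'I_k -> bool}) :=
    ((\prod_(j | j != i) wt t (m j) (d j)) * f (fun i => nat_of_bool (d i))).
  have E a : \sum_(d : {ffun 'I_k -> bool})
     (\prod_j wt t (upd m i a j) (d j)) * f (fun i => nat_of_bool (d i)) =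
     \sum_(d : {ffun 'I_k -> bool}) wt t a (d i) * C d.
    apply: eq_bigr => d _; rewrite (bigD1 i) //= /upd eqxx /C mulrA; congr (_ * _ * _).
    by apply: eq_bigr => j /negbTE ->.
  rewrite !E Hf.
  have -> : \sum_(d : {ffun 'I_k -> bool}) wt t n.+2 (d i) * C d =
            (1 + t) * \sum_(d : {ffun 'I_k -> bool}) wt t n.+1 (d i) * C d - t * \sum_(d : {ffun 'I_k -> bool}) wt t n (d i) * C d.
    rewrite !mulr_sumr -sumrB; apply: eq_bigr => d _; rewrite wt_rec; ring.
  ring.
- move=> d0.
  rewrite (bigD1 d0) //= [X in _ - (_ + X)]big1 ?addr0; last first.
    move=> d /eqP nd.
    have [i ni] : exists i, d i != d0 i.
      apply/existsP; rewrite -negb_forall; apply/negP=> /forallP F.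
      by apply: nd; apply/ffunP=> i; apply/eqP; apply: F.
    rewrite (@prod_eq0 _ _ _ i) ?mul0r //.
    by move: ni; case: (d i); case: (d0 i); rewrite /wt /= ?expr1 ?expr0 ?subrr.
  rewrite (eq_bigr (fun _ => t - 1)); last by move=> i _; case: (d0 i); rewrite /wt ?expr1 ?expr0.
  by rewrite prodr_const card_ord subrr.
Qed.
Lemma eq_fdet (R : comRingType) (V : finType) (M M' : V -> V -> R) :
  (forall x y, M x y = M' x y) -> fdet M = fdet M'.
Proof.
by move=> H; apply: eq_bigr => s _; congr (_ * _); apply: eq_bigr => x _; rewrite H.
Qed.

Lemma charpoly_fdet (V : finType) (r : rel V) :
  charpoly_graph r = fdet (fun x y => 'X *+ (x == y) - ((r x y)%:R : int)%:P).
Proof.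
have hinj : injective (@enum_val V predT) := @enum_val_inj V predT.
rewrite (fdet_inj hinj); last by move=> x /(_ (enum_rank x)); rewrite enum_rankK eqxx.
rewrite /charpoly_graph /char_poly /determinant /fdet.
apply: eq_bigr => s _; congr (_ * _); apply: eq_bigr => i _.
by rewrite !mxE (inj_eq hinj).
Qed.

Lemma inr_eq (A B : eqType) (x y : B) : (@inr A B x == inr y) = (x == y).
Proof. by []. Qed.

Section Ext.
Variables (T : finType) (e : rel T) (k : nat) (v : 'I_k -> T).

Notation VV m := (@ext_vert T k m).
Notation RR m := (@ext_rel T e k v m).

Definition CM (m : 'I_k -> nat) (x y : VV m) : {poly int} :=
  'X *+ (x == y) - ((RR m x y)%:R : int)%:P.

Lemma sig_eqE (m : 'I_k -> nat) (p q : {i : 'I_k & 'I_(m i)}) :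
  (p == q) = (tag p == tag q) && (val (tagged p) == val (tagged q)).
Proof.
case: p => i a; case: q => j b /=.
apply/eqP/andP => [E|[/eqP ij /eqP ab]].
  split; apply/eqP; [exact: (congr1 tag E) | exact: (congr1 (fun p : {i : 'I_k & 'I_(m i)} => nat_of_ord (tagged p)) E)].
subst j; congr existT; exact: val_inj.
Qed.

Definition emb (m' m : 'I_k -> nat) (H : forall i, (m' i <= m i)%N) (x : VV m') : VV m :=
  match x with
  | inl t => inl t
  | inr p => inr (Tagged (fun i => 'I_(m i)) (widen_ord (H (tag p)) (tagged p)))
  end.

Definition act (m' m : 'I_k -> nat) (x : VV m) : bool :=
  match x with inl _ => true | inr p => (val (tagged p) < m' (tag p))%N end.

Section Emb.
Variables (m' m : 'I_k -> nat) (H : forall i, (m' i <= m i)%N).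

Lemma emb_inj : injective (emb H).
Proof.
case=> [t|p]; case=> [t'|q] //=; first by case=> ->.
move=> E; have /= [E1 E2] := congr1 (fun z : VV m => if z is inr r
  then (nat_of_ord (tag r), nat_of_ord (tagged r)) else (0%N, 0%N)) E.
suff -> : p = q by [].
apply/eqP; rewrite sig_eqE; apply/andP; split; apply/eqP; [exact: val_inj|exact: E2].
Qed.

Lemma emb_rel x y : RR m (emb H x) (emb H y) = RR m' x y.
Proof. by case: x => [t|[i a]]; case: y => [t'|[j b]]. Qed.

Lemma act_emb x : act m' (emb H x).
Proof. by case: x => [t|[i a]] //=. Qed.

Lemma act_surj x : act m' x -> exists a, emb H a = x.
Proof.
case: x => [t _|[i b] /= hb]; first by exists (inl t).
exists (inr (Tagged (fun i => 'I_(m' i)) (Ordinal hb))).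
by congr inr; congr existT; apply: val_inj.
Qed.

Lemma chi_restrict (Mr : VV m -> VV m -> {poly int}) :
  (forall x y, Mr x y = if act m' x && act m' y then CM x y else (x == y)%:R) ->
  fdet Mr = charpoly_graph (RR m').
Proof.
move=> HM; rewrite charpoly_fdet (fdet_inj emb_inj).
  apply: eq_fdet => a b; rewrite HM !act_emb /CM (inj_eq emb_inj) emb_rel //.
move=> x nx y; rewrite HM; case: (boolP (act m' x)) => [ax|//].
by have [a E] := act_surj ax; move: (nx a); rewrite E eqxx.
Qed.
End Emb.

Lemma chi_fdet m : charpoly_graph (RR m) = fdet (@CM m).
Proof. by rewrite charpoly_fdet. Qed.

Lemma chi_rec m i j : m i = j.+2 ->
  charpoly_graph (RR m) =
  'X * charpoly_graph (RR (upd m i j.+1)) - charpoly_graph (RR (upd m i j)).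
Proof.
move=> Hm.
have h1 : (j.+1 < m i)%N by rewrite Hm.
have h0 : (j < m i)%N by rewrite Hm; lia.
pose u : VV m := inr (Tagged (fun i => 'I_(m i)) (Ordinal h1)).
pose w : VV m := inr (Tagged (fun i => 'I_(m i)) (Ordinal h0)).
have H1 l : (upd m i j.+1 l <= m l)%N by rewrite /upd; case: eqP => [->|]; rewrite ?Hm.
have H0 l : (upd m i j l <= m l)%N by rewrite /upd; case: eqP => [->|]; rewrite ?Hm //; lia.
have act1 x : act (upd m i j.+1) x = (x != u).
  case: x => [t|[l b]] //=; rewrite /u inr_eq sig_eqE /= /upd.
  case: (eqVneq l i) => [E|_]; last by rewrite ?ltn_ord. move: b; rewrite E => b; have : (nat_of_ord b < j.+2)%N by rewrite -Hm ltn_ord.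
  rewrite /=; lia.
have act0 x : act (upd m i j) x = (x != u) && (x != w).
  case: x => [t|[l b]] //=; rewrite /u /w !inr_eq !sig_eqE /= /upd.
  case: (eqVneq l i) => [E|_]; last by rewrite ?ltn_ord. move: b; rewrite E => b; have : (nat_of_ord b < j.+2)%N by rewrite -Hm ltn_ord.
  rewrite /=; lia.
have uw : u != w by rewrite /u /w inr_eq sig_eqE /= eqxx /=; lia.
have Ruu : RR m u u = false by rewrite /u /w /= eqxx /=; lia.
have Ruw : RR m u w = true by rewrite /u /w /= eqxx /=; lia.
have Rwu : RR m w u = true by rewrite /u /w /= eqxx /=; lia.
have Ru x : x != u -> x != w -> RR m u x = false.
  case: x => [t _ _|[l b] _]; first by rewrite /= andbF.
  rewrite /u /w inr_eq sig_eqE /=.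
  case: (eqVneq i l) => [E|_]; last by rewrite ?ltn_ord. move: b; rewrite -E => b; have : (nat_of_ord b < j.+2)%N by rewrite -Hm ltn_ord.
  rewrite /= ?eqxx /=; lia.
have Ru' x : x != u -> x != w -> RR m x u = false.
  case: x => [t _ _|[l b] _]; first by rewrite /= andbF.
  rewrite /u /w inr_eq sig_eqE /=.
  case: (eqVneq l i) => [E|_]; last by rewrite ?ltn_ord. move: b; rewrite E => b; have : (nat_of_ord b < j.+2)%N by rewrite -Hm ltn_ord.
  rewrite /= ?eqxx /=; lia.
rewrite chi_fdet (fdet_pendant (a := 'X) (u := u) (w := w)) //; first last.
- by move=> x xu xw; rewrite /CM Ru' // (negbTE xu) /= ?mulr0n ?polyC0 ?subr0.
- by move=> x xu xw; rewrite /CM Ru // eq_sym (negbTE xu) /= ?mulr0n ?polyC0 ?subr0.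
- by rewrite /CM Rwu eq_sym (negbTE uw) /= ?mulr0n ?polyC1 ?sub0r.
- by rewrite /CM Ruw (negbTE uw) /= ?mulr0n ?polyC1 ?sub0r.
- by rewrite /CM Ruu eqxx /= ?mulr1n ?polyC0 ?subr0.
congr (_ * _ - _).
  apply: (chi_restrict H1) => x y; rewrite !act1.
  by case: (x == u); case: (y == u).
apply: (chi_restrict H0) => x y; rewrite !act0.
by case: (x == u); case: (x == w); case: (y == u); case: (y == w).
Qed.

Lemma card_VV m : #|VV m| = (#|T| + \sum_i m i)%N.
Proof.
rewrite card_sum card_tagged sumnE big_map big_enum /=; congr (_ + _)%N.
by apply: eq_bigr => i _; rewrite card_ord.
Qed.

Lemma recip_auxE m : recip_aux (RR m) = Qb (charpoly_graph (RR m)) #|VV m|.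
Proof. by rewrite /recip_aux /Qb /charpoly_graph size_char_poly. Qed.

Lemma upd_upd (m : 'I_k -> nat) i a b : upd (upd m i a) i b = upd m i b.
Proof.
by apply: functional_extensionality => j; rewrite /upd; case: eqP.
Qed.

Lemma f_rec : isrec ('X^2 : {poly int}) (fun m => recip_aux (RR m)).
Proof.
move=> m i n.
have := @chi_rec (upd m i n.+2) i n.
have Hm : upd m i n.+2 i = n.+2 by rewrite /upd eqxx.
rewrite !recip_auxE !upd_upd => /(_ Hm) ->.

have c2 : #|VV (upd m i n.+2)| = #|VV (upd m i n)|.+2.
  by rewrite !card_VV !sum_upd; lia.
have c1 : #|VV (upd m i n.+1)| = #|VV (upd m i n)|.+1.
  by rewrite !card_VV !sum_upd; lia.
rewrite c2 c1 QbB QbX QbS2; last by rewrite /charpoly_graph size_char_poly.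
by rewrite (addrC 1).
Qed.

Lemma bip_ext m : bipartite (RR m) = bipartite e.
Proof.
apply/existsP/existsP => [[f /forallP F]|[f /forallP F]].
  exists [ffun x => f (inl x)]; apply/forallP => x; apply/forallP => y.
  apply/implyP => exy; rewrite !ffunE.
  by move: (F (inl x)) => /forallP /(_ (inl y)) /implyP; apply.
exists [ffun z : VV m => match z with
  | inl x => f x | inr p => f (v (tag p)) (+) ~~ odd (val (tagged p)) end].
apply/forallP => a; apply/forallP => b; apply/implyP; rewrite !ffunE.
case: a => [x|[i a]]; case: b => [y|[j b]] /=.
- by move=> exy; move: (F x) => /forallP /(_ y) /implyP; apply.
- by case/andP=> [/eqP -> /eqP ->]; case: (f _).
- by case/andP=> [/eqP -> /eqP ->]; case: (f _).
- case/andP=> [/eqP ij]; move: b; rewrite -ij => b.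
  by case/orP=> /eqP <-; rewrite /= ?negbK; case: (f _); case: (odd _).
Qed.
End Ext.
Definition cf (t : {poly int}) (b b' : bool) : {poly int} :=
  match b, b' with
  | true, true => 1 | true, false => -1 | false, true => -1 | false, false => t
  end.

Lemma wt_split (t : {poly int}) n b :
  wt t n b = \sum_(eb : bool) t ^+ (eb * n)%N * cf t eb b.
Proof. by rewrite big_bool /= mul1n mul0n expr0; case: b; rewrite /wt /=; ring. Qed.

Definition Pt (T : finType) (e : rel T) (k : nat) (v : 'I_k -> T)
  (eps : {ffun 'I_k -> bool}) : {poly int} :=
  \sum_(d : {ffun 'I_k -> bool}) (\prod_i cf 'X^2 (eps i) (d i)) *
     recip_aux (@ext_rel T e k v (fun i => nat_of_bool (d i))).

Lemma key (T : finType) (e : rel T) (k : nat) (v : 'I_k -> T) (m : 'I_k -> nat) :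
  ('X^2 - 1) ^+ k * recip_aux (@ext_rel T e k v m) =
  \sum_(eps : {ffun 'I_k -> bool}) ('X^2) ^+ (\sum_(i < k) eps i * m i)%N * Pt e v eps.
Proof.
have := interp (f_rec e v) m => /= ->.
have E d : \prod_i wt 'X^2 (m i) (d i) = \sum_(eps : {ffun 'I_k -> bool})
   ('X^2) ^+ (\sum_(i < k) eps i * m i)%N * \prod_i cf 'X^2 (eps i) (d i).
  rewrite (eq_bigr (fun i => \sum_(eb : bool) ('X^2) ^+ (eb * m i)%N * cf 'X^2 eb (d i)));
    last by move=> i _; exact: wt_split.
  rewrite bigA_distr_bigA; apply: eq_bigr => eps _.
  by rewrite big_split /= prodrXr.
under eq_bigr => d _ do rewrite E mulr_suml.
rewrite exchange_big; apply: eq_bigr => eps _; rewrite /Pt mulr_sumr.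
by apply: eq_bigr => d _; rewrite mulrA.
Qed.

Unset Implicit Arguments.
Theorem lemma11 (T : finType) (e : rel T)
  (e_sym : symmetric e) (e_irr : irreflexive e)
  (k : nat) (v : 'I_k -> T) :
  exists P : {ffun 'I_k -> bool} -> {poly int},
    forall m : 'I_k -> nat, (forall i, (2 <= m i)%N) ->
      let Y : {poly int} := if bipartite e then 'X else 'X^2 in
      (Y - 1) ^+ k * recip (@ext_rel T e k v m) =
      \sum_(eps : {ffun 'I_k -> bool})
         Y ^+ (\sum_(i < k) eps i * m i)%N * P eps.
Proof.
exists (if bipartite e then (fun eps => evenp (Pt e v eps)) else Pt e v).
move=> m _ /=; rewrite /recip bip_ext.
case: (bipartite e); last exact: key.
have -> : \poly_(i < size (recip_aux (ext_rel e v (m:=m))))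
            (recip_aux (ext_rel e v (m:=m)))`_(2 * i) = evenp (recip_aux (ext_rel e v (m:=m))).
  by [].
rewrite -evenM1k key even_sum; apply: eq_bigr => eps _; by rewrite evenXn.
Qed.
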